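(* There exists an instance of 2-SCSS-$(2,2)$ in which no optimum solution is general-reverse-compatible.
   Context: The 2-SCSS-$(k_1,k_2)$ problem: given a directed graph $G=(V,E)$ with edge weights $\omega:E\to\mathbb{R}^{\geq 0}$, terminals $s,t$ and integers $k_1,k_2$, find $k_1$ paths $F_1,\dots,F_{k_1}$ from $s$ to $t$ and $k_2$ paths $B_1,\dots,B_{k_2}$ from $t$ to $s$ minimizing $\sum_{e\in E}\omega(e)\phi(e)$ with $\phi(e)=\max\{|\{i: e\in F_i\}|,\ |\{j: e\in B_j\}|\}$. For an $s\leadsto t$ path $F$ and a $t\leadsto s$ path $B$, let $P_1,\dots,P_d$ be the maximal sub-paths shared by $F$ and $B$, with $P_j$ the $j$-th encountered while traversing $F$; $(F,B)$ is path-reverse-compatible if for every $j\in[d]$, $P_j$ is the $(d-j+1)$-th of them encountered while traversing $B$. A solution $(\{F_1,\dots,F_{k_1}\},\{B_1,\dots,B_{k_2}\})$ is general-reverse-compatible if $(F_i,B_j)$ is path-reverse-compatible for all $i\in[k_1]$, $j\in[k_2]$. *)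

(* Defs.v *)
From HB Require Import structures.
From mathcomp Require Import all_boot all_order all_algebra.
From mathcomp Require Import reals.
Set Implicit Arguments. Unset Strict Implicit. Unset Printing Implicit Defensive.
Import Order.TTheory GRing.Theory Num.Theory.
Local Open Scope ring_scope.

Section TwoSCSS.
Variable V : finType.

Notation edge := (V * V)%type.

Definition pedges (p : seq V) : seq edge := zip p (behead p).

Definition st_path (adj : rel V) (s t : V) (p : seq V) : bool :=
  if p is x :: q then [&& x == s, path adj x q, last x q == t & uniq p]
  else false.

Definition phi (Fs Bs : seq (seq V)) (e : edge) : nat :=
  maxn (count (fun F => e \in pedges F) Fs) (count (fun B => e \in pedges B) Bs).

Definition cost (R : realType) (adj : rel V) (w : edge -> R)
    (Fs Bs : seq (seq V)) : R :=
  \sum_(e : edge | adj e.1 e.2) w e * (phi Fs Bs e)%:R.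

Definition solution (adj : rel V) (s t : V) (k1 k2 : nat)
    (Fs Bs : seq (seq V)) : Prop :=
  [/\ size Fs = k1, all (st_path adj s t) Fs,
      size Bs = k2 & all (st_path adj t s) Bs].

Definition optimum (R : realType) (adj : rel V) (w : edge -> R) (s t : V)
    (k1 k2 : nat) (Fs Bs : seq (seq V)) : Prop :=
  solution adj s t k1 k2 Fs Bs /\
  forall Fs' Bs', solution adj s t k1 k2 Fs' Bs' ->
    cost adj w Fs Bs <= cost adj w Fs' Bs'.

Definition shared (F B : seq V) (P : seq edge) : bool :=
  [&& P != [::], infix P (pedges F) & infix P (pedges B)].

Definition max_shared (F B : seq V) (P : seq edge) : Prop :=
  shared F B P /\ forall Q, shared F B Q -> infix P Q -> Q = P.

Definition pos (X : seq V) (P : seq edge) : nat := infix_index P (pedges X).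

(* Ps = [P_1; ...; P_d] lists the maximal shared sub-paths in the order
   encountered along F, and rev Ps lists them in the order encountered
   along B, i.e. P_j is the (d-j+1)-th encountered along B. *)
Definition path_rev_compat (F B : seq V) : Prop :=
  exists Ps : seq (seq edge),
    [/\ forall P, P \in Ps <-> max_shared F B P,
        sorted (fun P Q => pos F P < pos F Q)%N Ps &
        sorted (fun P Q => pos B P < pos B Q)%N (rev Ps)].

Definition general_rev_compat (Fs Bs : seq (seq V)) : Prop :=
  forall F B, F \in Fs -> B \in Bs -> path_rev_compat F B.

End TwoSCSS.

(* Main.v *)
Require Import Defs.
From HB Require Import structures.
From mathcomp Require Import all_boot all_order all_algebra.
From mathcomp Require Import reals.
Import Order.TTheory GRing.Theory Num.Theory.
Local Open Scope ring_scope.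

Definition Ed : seq (nat*nat) := [:: (0,7);(7,2);(2,3);(3,6);(6,4);(4,5);(5,1);(1,6);(6,2);(3,7);(7,4);(5,0)]%N.
Definition adj8 : rel 'I_8 := fun x y => (val x, val y) \in Ed.
Definition Wd : seq (nat*nat) := [:: (2,3);(6,4);(7,4)]%N.
Definition wN (e : 'I_8 * 'I_8) : nat := ((val e.1, val e.2) \in Wd).
Definition vo (k : nat) : 'I_8 := Ordinal (ltn_pmod k (isT : (0 < 8)%N)).
Definition P8 (l : seq nat) : seq 'I_8 := map vo l.
Definition F1 := P8 [:: 0;7;2;3;6;4;5;1]%N.
Definition F2 := P8 [:: 0;7;4;5;1]%N.
Definition B1 := P8 [:: 1;6;2;3;7;4;5;0]%N.
Definition B2 := P8 [:: 1;6;4;5;0]%N.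
Definition ab := (vo 2, vo 3).
Definition uc := (vo 6, vo 4).
Definition vc := (vo 7, vo 4).
Definition costN (Fs Bs : seq (seq 'I_8)) := (phi Fs Bs ab + phi Fs Bs uc + phi Fs Bs vc)%N.

Fixpoint walks (k : nat) (x : 'I_8) : seq (seq 'I_8) :=
  [:: [:: x]] ++ (if k is k'.+1 then
     flatten (map (fun y => map (cons x) (walks k' y)) (filter (adj8 x) (map vo (iota 0 8))))
   else [::]).

Lemma walksP q : forall k x, path adj8 x q -> (size q <= k)%N -> x :: q \in walks k x.
Proof.
elim: q => [|y q IH] k x /=; first by case: k => [|k] _ _; rewrite /= inE eqxx.
case/andP=> Hxy Hp; case: k => [|k] //= Hs.
rewrite inE; apply/orP; right; apply/flattenP.
exists (map (cons x) (walks k y)); last by apply: map_f; apply: IH.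
apply: map_f; rewrite (mem_filter (adj8 x) y (map vo (iota 0 8))) Hxy andTb.
apply/mapP; exists (val y); first by rewrite mem_iota add0n ltn_ord.
by apply: val_inj; rewrite /= modn_small.
Qed.

Lemma st_size s t p : st_path adj8 s t p -> (size p <= 8)%N.
Proof.
case: p => [|x q] // /and4P[_ _ _ Hu].
rewrite -(card_uniqP Hu); apply: leq_trans (max_card _) _; by rewrite card_ord.
Qed.

Lemma Fpaths p : st_path adj8 (vo 0) (vo 1) p -> (p == F1) || (p == F2).
Proof.
move=> H; have Hs := st_size _ _ _ H.
have Hw : p \in walks 7 (vo 0).
  move: H Hs; case: p => [|x q] // /and4P[/eqP -> Hp _ _] Hs; exact: walksP.
have : all (fun p => st_path adj8 (vo 0) (vo 1) p ==> (p == F1) || (p == F2)) (walks 7 (vo 0)).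
  by vm_compute.
by move/allP/(_ _ Hw)/implyP; apply.
Qed.

Lemma Bpaths p : st_path adj8 (vo 1) (vo 0) p -> (p == B1) || (p == B2).
Proof.
move=> H; have Hs := st_size _ _ _ H.
have Hw : p \in walks 7 (vo 1).
  move: H Hs; case: p => [|x q] // /and4P[/eqP -> Hp _ _] Hs; exact: walksP.
have : all (fun p => st_path adj8 (vo 1) (vo 0) p ==> (p == B1) || (p == B2)) (walks 7 (vo 1)).
  by vm_compute.
by move/allP/(_ _ Hw)/implyP; apply.
Qed.

Definition FL := [:: [:: F1; F1]; [:: F1; F2]; [:: F2; F1]; [:: F2; F2]].
Definition BL := [:: [:: B1; B1]; [:: B1; B2]; [:: B2; B1]; [:: B2; B2]].

Lemma sol_cases Fs Bs : solution adj8 (vo 0) (vo 1) 2 2 Fs Bs -> (Fs \in FL) /\ (Bs \in BL).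
Proof.
case=> HF HaF HB HaB; split.
  case: Fs HF HaF => [|f1 [|f2 [|]]] // _ /and3P[h1 h2 _].
  by move: (Fpaths _ h1) (Fpaths _ h2) => /orP[]/eqP-> /orP[]/eqP->; vm_compute.
case: Bs HB HaB => [|f1 [|f2 [|]]] // _ /and3P[h1 h2 _].
by move: (Bpaths _ h1) (Bpaths _ h2) => /orP[]/eqP-> /orP[]/eqP->; vm_compute.
Qed.

Lemma voE (x : 'I_8) k : (k < 8)%N -> (x == vo k) = (val x == k).
Proof. by move=> hk; rewrite -val_eqE /= modn_small. Qed.

Lemma costE (R : realType) Fs Bs :
  cost adj8 (fun e => (wN e)%:R : R) Fs Bs = (costN Fs Bs)%:R.
Proof.
rewrite /cost (bigD1 ab); last by vm_compute.
rewrite (bigD1 uc); last by vm_compute.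
rewrite (bigD1 vc); last by vm_compute.
rewrite big1 ?addr0.
  have -> : wN ab = 1%N by vm_compute.
  have -> : wN uc = 1%N by vm_compute.
  have -> : wN vc = 1%N by vm_compute.
  by rewrite !mul1r /costN !natrD /= addr0 addrA.
move=> [x y] /= /andP[/andP[/andP[_ H1] H2] H3].
suff -> : wN (x, y) = 0%N by rewrite mul0r.
rewrite /wN /=; case E : ((val x, val y) \in Wd) => //; move: E; rewrite !inE !xpair_eqE => /or3P[] /andP[h1 h2].
- by move: H1; rewrite /ab xpair_eqE !voE // h1 h2.
- by move: H2; rewrite /uc xpair_eqE !voE // h1 h2.
- by move: H3; rewrite /vc xpair_eqE !voE // h1 h2.
Qed.

Definition allinf (T : eqType) (L : seq T) : seq (seq T) :=
  flatten [seq [seq take j (drop i L) | j <- iota 0 (size L).+1] | i <- iota 0 (size L).+1].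
Arguments allinf {T}.

Lemma infix_allinf (T : eqType) (Q L : seq T) : infix Q L -> Q \in allinf L.
Proof.
case/infixP => s1 [s2 E].
have hs : size L = (size s1 + size Q + size s2)%N by rewrite E !size_cat addnA.
apply/flattenP; exists [seq take j (drop (size s1) L) | j <- iota 0 (size L).+1].
  by apply/mapP; exists (size s1) => //; rewrite mem_iota add0n ltnS hs -addnA leq_addr.
have -> : Q = take (size Q) (drop (size s1) L).
  by rewrite E drop_size_cat // take_size_cat.
by apply/mapP; exists (size Q) => //; rewrite mem_iota add0n ltnS hs addnAC leq_addl.
Qed.

Lemma maxsh P : shared F1 B1 P ->
  all (fun Q => shared F1 B1 Q ==> infix P Q ==> (Q == P)) (allinf (pedges F1)) ->
  max_shared F1 B1 P.
Proof.
move=> H Ha; split=> // Q HQ HPQ.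
have HQ' := HQ; case/and3P: HQ => _ HQ _.
by have := allP Ha Q (infix_allinf _ _ _ HQ); rewrite HQ' HPQ /= => /eqP.
Qed.

Definition cd := (vo 4, vo 5).

Lemma incompat : ~ path_rev_compat F1 B1.
Proof.
case=> Ps [HPs Hs1 Hs2].
have m1 : [:: ab] \in Ps by apply/HPs; apply: maxsh; vm_compute.
have m2 : [:: cd] \in Ps by apply/HPs; apply: maxsh; vm_compute.
rewrite rev_sorted in Hs2.
have t1 : transitive (fun P Q => (pos F1 P < pos F1 Q)%N).
  by move=> y x z h1 h2; exact: ltn_trans h1 h2.
have t2 : transitive (fun z y => (pos B1 y < pos B1 z)%N).
  by move=> y x z h1 h2; exact: ltn_trans h2 h1.
have E1 : (pos B1 [:: cd] < pos B1 [:: ab])%N = false by vm_compute.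
have E2 : (pos F1 [:: cd] < pos F1 [:: ab])%N = false by vm_compute.
have E3 : ([:: ab] == [:: cd]) = false by vm_compute.
case: (ltngtP (index [:: ab] Ps) (index [:: cd] Ps)) => h.
- by have := sorted_ltn_index t2 Hs2 _ _ m1 m2 h; rewrite E1.
- by have := sorted_ltn_index t1 Hs1 _ _ m2 m1 h; rewrite E2.
- by move: E3; rewrite -{1}(nth_index [::] m1) h nth_index // eqxx.
Qed.

Definition TF := [:: F1; F2].
Definition TB := [:: B1; B2].

Lemma Tsol : solution adj8 (vo 0) (vo 1) 2 2 TF TB.
Proof. by split => //; vm_compute. Qed.

Theorem theorem4 (R : realType) :
  exists (n : nat) (adj : rel 'I_n) (w : 'I_n * 'I_n -> R) (s t : 'I_n),
    [/\ s != t,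
        (forall e : 'I_n * 'I_n, adj e.1 e.2 -> 0 <= w e),
        (exists Fs Bs, optimum adj w s t 2 2 Fs Bs) &
        (forall Fs Bs, optimum adj w s t 2 2 Fs Bs ->
           ~ general_rev_compat Fs Bs)].
Proof.
exists 8%N, adj8, (fun e => (wN e)%:R), (vo 0), (vo 1); split.
- by vm_compute.
- by move=> e _; exact: ler0n.
- exists TF, TB; split; first exact: Tsol.
  move=> Fs Bs Hs; rewrite !costE ler_nat.
  case: (sol_cases _ _ Hs) => HF HB.
  have : all (fun Fs => all (fun Bs => (costN TF TB <= costN Fs Bs)%N) BL) FL.
    by vm_compute.
  by move/allP/(_ _ HF)/allP/(_ _ HB).
- move=> Fs Bs [Hs Hopt] Hg.
  have := Hopt _ _ Tsol; rewrite !costE ler_nat => Hle.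
  case: (sol_cases _ _ Hs) => HF HB.
  have : all (fun Fs => all (fun Bs =>
     (costN Fs Bs <= costN TF TB)%N ==> (F1 \in Fs) && (B1 \in Bs)) BL) FL.
    by vm_compute.
  move=> /allP/(_ _ HF)/allP/(_ _ HB)/implyP/(_ Hle)/andP[h1 h2].
  exact: incompat (Hg _ _ h1 h2).
Qed.
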